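(* Let $S$ be a finite poset and let $L=(L_{x,y})_{x,y\in S}$ be the infinitesimal generator of a continuous-time Markov chain on $S$. Then $L$ is the generator of a realizably monotone Markov chain if and only if there exists a function $\Lambda:\mathcal{M}\to[0,\infty)$ such that \[ L_{x,y}=\sum_{f\in\mathcal{M}:\,f(x)=y}\Lambda(f)\qquad\text{for all }x,y\in S,\ x\neq y . \]
   Context: A generator on a finite set $S$ is a real matrix $L=(L_{x,y})_{x,y\in S}$ with $L_{x,y}\ge 0$ for $x\neq y$ and $L_{x,x}=-\sum_{y\neq x}L_{x,y}$; all Markov chains are time-homogeneous and, in continuous time, regular (finitely many jumps in bounded time intervals a.s.). $\mathcal{M}$ denotes the set of increasing maps $f:S\to S$ (i.e. $x\le y\Rightarrow f(x)\le f(y)$). A continuous-time Markov chain on $S$ with transition probabilities $P_t(x,y)$ is realizably monotone if there is a Markov chain $(\xi_t)_{t\ge0}$ with values in $S^S$ (maps $S\to S$) such that $\xi_0=\mathrm{Id}$; for each $z\in S$, $(\xi_t(z))_{t\ge 0}$ is a Markov chain with transition probabilities $P_t$; and $w\le z$ implies $\xi_t(w)\le\xi_t(z)$ for all $t\ge 0$. A generator is called realizably monotone if it generates a realizably monotone chain. *)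

(* Defs.v *)
From mathcomp Require Import all_boot.
From Stdlib Require Import Reals List.

Set Implicit Arguments.
Unset Strict Implicit.
Unset Printing Implicit Defensive.

Definition rsum (T : finType) (F : T -> R) : R := \big[Rplus/0%R]_(i : T) F i.

Definition is_generator (T : finType) (L : T -> T -> R) : Prop :=
  (forall x y : T, x <> y -> (0 <= L x y)%R) /\
  (forall x : T, L x x = - rsum (fun y => if y == x then 0%R else L x y))%R.

(* P is the transition function (t |-> exp(tL)) of the chain with generator L:
   the unique solution of the Kolmogorov backward equation with P_0 = Id. *)
Definition trans_fun (T : finType) (L : T -> T -> R) (P : R -> T -> T -> R) : Prop :=
  (forall x y : T, P 0%R x y = if x == y then 1%R else 0%R) /\
  (forall (t : R) (x y : T),
      derivable_pt_lim (fun s => P s x y) t (rsum (fun z => L x z * P t z y))%R).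

Definition increasing_map (S : finType) (le : rel S) (f : {ffun S -> S}) : bool :=
  [forall x, forall y, le x y ==> le (f x) (f y)].

(* finite-dimensional distribution of the coordinate process (xi_t(z))_t of a
   chain on maps S -> S with transition function Q, started at g0:
   ds = [(d1,y1);...;(dn,yn)] gives P(xi_{t1}(z)=y1,...,xi_{tn}(z)=yn) with
   time increments d_i = t_i - t_{i-1}. *)
Fixpoint fdd_maps (S : finType)
    (Q : R -> {ffun S -> S} -> {ffun S -> S} -> R) (z : S)
    (g0 : {ffun S -> S}) (ds : list (R * S)) : R :=
  match ds with
  | nil => 1%R
  | (d, y) :: ds' =>
      rsum (fun g : {ffun S -> S} =>
              if g z == y then (Q d g0 g * fdd_maps Q z g ds')%R else 0%R)
  end.

Fixpoint fdd_pts (S : finType) (P : R -> S -> S -> R) (y0 : S)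
    (ds : list (R * S)) : R :=
  match ds with
  | nil => 1%R
  | (d, y) :: ds' => (P d y0 y * fdd_pts P y ds')%R
  end.

(* L generates a realizably monotone chain: there is a (regular, homogeneous)
   Markov chain xi on S^S, with generator G and transition function Q, started
   at Id, which is a.s. increasing at every time t >= 0, and such that for
   every z the coordinate process xi_t(z) is a Markov chain with transition
   probabilities P_t = exp(tL) (equality of all finite-dimensional laws). *)
Definition realizably_monotone (S : finType) (le : rel S) (L : S -> S -> R) : Prop :=
  exists (P : R -> S -> S -> R)
         (G : {ffun S -> S} -> {ffun S -> S} -> R)
         (Q : R -> {ffun S -> S} -> {ffun S -> S} -> R),
    trans_fun L P /\ is_generator G /\ trans_fun G Q /\
    (forall (t : R) (g : {ffun S -> S}),
        (0 <= t)%R -> Q t [ffun x => x] g <> 0%R -> increasing_map le g) /\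
    (forall (z : S) (ds : list (R * S)),
        Forall (fun p => (0 <= fst p)%R) ds ->
        fdd_maps Q z [ffun x => x] ds = fdd_pts P z ds).

(* Main.v *)
Require Import Defs.
From mathcomp Require Import all_boot.
From Stdlib Require Import Reals List.
From Stdlib Require Import Lra.
From Coquelicot Require Import Coquelicot.
From HB Require Import structures.

Set Implicit Arguments.
Unset Strict Implicit.
Unset Printing Implicit Defensive.

Local Open Scope R_scope.

HB.instance Definition _ := Monoid.isComLaw.Build R 0 Rplus (fun a b c => esym (Rplus_assoc a b c)) Rplus_comm Rplus_0_l.
HB.instance Definition _ := Monoid.isMulLaw.Build R 0 Rmult Rmult_0_l Rmult_0_r.
HB.instance Definition _ := Monoid.isAddLaw.Build R Rmult Rplus Rmult_plus_distr_r Rmult_plus_distr_l.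

Lemma rsum_ext (T : finType) (F G : T -> R) : (forall i, F i = G i) -> rsum F = rsum G.
Proof. move=> H; rewrite /rsum; apply: eq_bigr => i _; exact: H. Qed.

Lemma rsum_one (T : finType) (F : T -> R) (a : T) :
  (forall i, i != a -> F i = 0) -> rsum F = F a.
Proof.
move=> H; rewrite /rsum (bigD1 a) //= big1 ?Rplus_0_r // => i Hi; exact: H.
Qed.

Lemma rsum_split (T : finType) (F : T -> R) (a : T) :
  rsum F = F a + rsum (fun y => if y == a then 0 else F y).
Proof.
rewrite /rsum (bigD1 a) //=; congr Rplus.
rewrite [in RHS](bigD1 a) //= eqxx Rplus_0_l.
apply: eq_bigr => i Hi; by rewrite (negbTE Hi).
Qed.

Lemma rsum_exchange (T U : finType) (F : T -> U -> R) :
  rsum (fun i => rsum (fun j => F i j)) = rsum (fun j => rsum (fun i => F i j)).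
Proof. rewrite /rsum; exact: exchange_big. Qed.

Lemma rsum_distrl (T : finType) (F : T -> R) a :
  rsum F * a = rsum (fun i => F i * a).
Proof. rewrite /rsum; exact: (big_distrl (times := Rmult)). Qed.

Lemma rsum_distrr (T : finType) (F : T -> R) a :
  a * rsum F = rsum (fun i => a * F i).
Proof. rewrite /rsum; exact: (big_distrr (times := Rmult)). Qed.

Lemma rsum_plus (T : finType) (F G : T -> R) :
  rsum (fun i => F i + G i) = rsum F + rsum G.
Proof. rewrite /rsum; exact: big_split. Qed.

Lemma rsum_nonzero (T : finType) (F : T -> R) : rsum F <> 0 -> exists i, F i <> 0.
Proof.
move=> H; apply: Classical_Prop.NNPP => Hn; apply: H; rewrite /rsum big1 // => i _.
by apply: Classical_Prop.NNPP => Hi; apply: Hn; exists i.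
Qed.

Lemma rsum_ge0 (T : finType) (F : T -> R) : (forall i, 0 <= F i) -> 0 <= rsum F.
Proof.
move=> H; rewrite /rsum; elim/big_rec: _ => [|i x _ Hx]; first lra.
by have := H i; lra.
Qed.

Lemma rsum_le (T : finType) (F G : T -> R) : (forall i, F i <= G i) -> rsum F <= rsum G.
Proof.
move=> H; rewrite /rsum; elim/big_rec2: _ => [|i x y _ Hxy]; first lra.
by have := H i; lra.
Qed.

Lemma rsum_term_le (T : finType) (F : T -> R) a : (forall i, 0 <= F i) -> F a <= rsum F.
Proof.
move=> H; rewrite (rsum_split F a); have: 0 <= rsum (fun y => if y == a then 0 else F y).
  by apply: rsum_ge0 => i; case: ifP => _; [lra|].
lra.
Qed.

Lemma rsum_abs (T : finType) (F : T -> R) : Rabs (rsum F) <= rsum (fun i => Rabs (F i)).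
Proof.
rewrite /rsum; elim/big_rec2: _ => [|i x y _ Hxy]; first by rewrite Rabs_R0; lra.
apply: Rle_trans (Rabs_triang _ _) _; lra.
Qed.

Lemma gen_rowsum (T : finType) (A : T -> T -> R) : is_generator A -> forall x, rsum (A x) = 0.
Proof. move=> [_ HA] x; rewrite (rsum_split (A x) x) {1}HA; lra. Qed.

Lemma is_pseries_zero (t : R) : is_pseries (fun _ : nat => 0) t 0.
Proof.
rewrite -{2}(PSeries_const_0 t); apply: PSeries_correct; apply: CV_radius_inside.
by rewrite CV_radius_const_0.
Qed.

Lemma PSeries_rsum (T : finType) (c : T -> R) (b : T -> nat -> R) t :
  (forall w, ex_pseries (b w) t) ->
  PSeries (fun n => rsum (fun w => c w * b w n)) t = rsum (fun w => c w * PSeries (b w) t).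
Proof.
move=> Hb; apply: is_pseries_unique; rewrite /rsum; elim: (index_enum T) => [|w r IH].
  rewrite big_nil; apply: (is_pseries_ext (fun _ => 0)); last exact: is_pseries_zero.
  by move=> n; rewrite big_nil.
rewrite big_cons /=.
apply: (is_pseries_ext (PS_plus (PS_scal (c w) (b w))
                           (fun n => \big[Rplus/0]_(j <- r) (c j * b j n)))).
  by move=> n; rewrite big_cons.
apply: (is_pseries_plus _ _ _ (scal (c w) (PSeries (b w) t))) => //.
apply: is_pseries_scal; first by rewrite /mult /=; ring_simplify; reflexivity.
exact: PSeries_correct.
Qed.

Fixpoint mpow (T : finType) (A : T -> T -> R) (n : nat) (x y : T) : R :=
  match n with
  | O => if x == y then 1 else 0
  | S m => rsum (fun w => A x w * mpow A m w y)
  end.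

Definition Mb (T : finType) (A : T -> T -> R) := rsum (fun x => rsum (fun y => Rabs (A x y))).

Lemma Mb_ge0 (T : finType) (A : T -> T -> R) : 0 <= Mb A.
Proof. apply: rsum_ge0 => x; apply: rsum_ge0 => y; exact: Rabs_pos. Qed.

Lemma mpow_bound (T : finType) (A : T -> T -> R) n x y : Rabs (mpow A n x y) <= Mb A ^ n.
Proof.
elim: n x y => [|n IH] x y /=.
  by case: ifP => _; rewrite ?Rabs_R1 ?Rabs_R0; lra.
apply: Rle_trans (rsum_abs _) _.
apply: (Rle_trans _ (rsum (fun w => Rabs (A x w) * Mb A ^ n))).
  apply: rsum_le => w; rewrite Rabs_mult; apply: Rmult_le_compat_l; [exact: Rabs_pos|exact: IH].
rewrite -rsum_distrl; apply: Rmult_le_compat_r; first by apply: pow_le; exact: Mb_ge0.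
rewrite /Mb; have := @rsum_term_le T (fun x => rsum (fun y => Rabs (A x y))) x; apply.
move=> i; apply: rsum_ge0 => j; exact: Rabs_pos.
Qed.

Definition coef (T : finType) (A : T -> T -> R) x y (n : nat) : R :=
  mpow A n x y / INR (Factorial.fact n).

Definition mexp (T : finType) (A : T -> T -> R) (t : R) x y : R := PSeries (coef A x y) t.

Lemma term_le_exp (u : R) (n : nat) : 0 <= u -> u ^ n / INR (Factorial.fact n) <= exp u.
Proof.
move=> Hu; apply: Rle_trans (exp_ge_taylor u n Hu).
have Hpos : forall k, 0 <= u ^ k / INR (Factorial.fact k).
  move=> k; apply: Rmult_le_pos; first exact: pow_le.
  apply: Rlt_le; apply: Rinv_0_lt_compat; exact: INR_fact_lt_0.
case: n => [|n]; first by simpl; lra.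
rewrite tech5; have := cond_pos_sum _ n Hpos; lra.
Qed.

Lemma coef_radius (T : finType) (A : T -> T -> R) x y r :
  Rbar_lt (Rabs r) (CV_radius (coef A x y)).
Proof.
apply: (Rbar_lt_le_trans _ (Rbar.Finite (Rabs r + 1))); first by simpl; lra.
case: (CV_radius_bounded (coef A x y)) => Hub _; apply: Hub.
exists (exp (Mb A * (Rabs r + 1))) => n.
have Hr : 0 <= Rabs r + 1 by have := Rabs_pos r; lra.
apply: Rle_trans (term_le_exp n _); last by apply: Rmult_le_pos; [exact: Mb_ge0|lra].
rewrite /coef Rabs_mult Rabs_mult Rpow_mult_distr (Rabs_right (/ _)); last first.
  apply: Rle_ge; apply: Rlt_le; apply: Rinv_0_lt_compat; exact: INR_fact_lt_0.
rewrite (Rabs_right ((Rabs r + 1) ^ n)); last by apply: Rle_ge; exact: pow_le.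
have Hf : 0 <= / INR (Factorial.fact n).
  apply: Rlt_le; apply: Rinv_0_lt_compat; exact: INR_fact_lt_0.
have := mpow_bound A n x y; have := pow_le _ n Hr => H1 H2.
rewrite /Rdiv.
replace (Rabs (mpow A n x y) * / INR (Factorial.fact n) * (Rabs r + 1) ^ n)
  with ((Rabs (mpow A n x y) * (Rabs r + 1) ^ n) * / INR (Factorial.fact n)) by ring.
apply: Rmult_le_compat_r => //; apply: Rmult_le_compat_r => //.
Qed.

Lemma coef_ex (T : finType) (A : T -> T -> R) x y t : ex_pseries (coef A x y) t.
Proof. apply: CV_radius_inside; exact: coef_radius. Qed.

Lemma mexp_trans (T : finType) (A : T -> T -> R) : trans_fun A (mexp A).
Proof.
split.
  move=> x y; rewrite /mexp PSeries_0 /coef /=; case: ifP => _; lra.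
move=> t x y; apply/is_derive_Reals.
have H := is_derive_PSeries _ _ (coef_radius A x y t).
suff <- : PSeries (PS_derive (coef A x y)) t = rsum (fun z => A x z * mexp A t z y) by [].
rewrite /mexp -PSeries_rsum; last by move=> w; exact: coef_ex.
apply: PSeries_ext => n; rewrite /PS_derive /coef fact_simpl mult_INR.
change (mpow A n.+1 x y) with (rsum (fun w => A x w * mpow A n w y)).
rewrite /Rdiv rsum_distrl rsum_distrr; apply: rsum_ext => w.
have := INR_fact_lt_0 n; have : 0 < INR n.+1 by apply: lt_0_INR; apply/ltP.
move=> H1 H2; field; lra.
Qed.

Lemma rsum_if (T : finType) (c : bool) (F : T -> R) :
  (if c then rsum F else 0) = rsum (fun i => if c then F i else 0).
Proof. case: c => //; rewrite /rsum big1 //. Qed.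

Lemma mpow_lump (T U : finType) (A : T -> T -> R) (B : U -> U -> R) (phi : T -> U) :
  (forall g x, rsum (fun w => if phi w == x then A g w else 0) = B (phi g) x) ->
  forall n g y, rsum (fun h => if phi h == y then mpow A n g h else 0) = mpow B n (phi g) y.
Proof.
move=> HAB; elim=> [|n IH] g y.
  rewrite (@rsum_one _ _ g) /=; first by rewrite eqxx.
  by move=> h Hh; case: ifP => _ //; case: eqP => // E; rewrite E eqxx in Hh.
rewrite /=.
transitivity (rsum (fun w => A g w * mpow B n (phi w) y)).
  rewrite (rsum_ext (G := fun h => rsum (fun w => if phi h == y then A g w * mpow A n w h else 0)));
    last by move=> h; rewrite rsum_if.
  rewrite rsum_exchange; apply: rsum_ext => w; rewrite -IH rsum_distrr; apply: rsum_ext => h.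
  by case: ifP => _; lra.
transitivity (rsum (fun x => rsum (fun w => if phi w == x then A g w * mpow B n (phi w) y else 0))).
  rewrite rsum_exchange; apply: rsum_ext => w; rewrite (@rsum_one _ _ (phi w)) ?eqxx //.
  by move=> x Hx; rewrite eq_sym (negbTE Hx).
apply: rsum_ext => x; rewrite -HAB rsum_distrl; apply: rsum_ext => w.
by case: eqP => [->|]; lra.
Qed.

Lemma mexp_lump (T U : finType) (A : T -> T -> R) (B : U -> U -> R) (phi : T -> U) :
  (forall g x, rsum (fun w => if phi w == x then A g w else 0) = B (phi g) x) ->
  forall t g y, rsum (fun h => if phi h == y then mexp A t g h else 0) = mexp B t (phi g) y.
Proof.
move=> HAB t g y; rewrite /mexp.
rewrite (PSeries_ext _ (fun n => rsum (fun h => (if phi h == y then 1 else 0) * coef A g h n))).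
  rewrite PSeries_rsum; last by move=> w; exact: coef_ex.
  by apply: rsum_ext => h; case: ifP => _; lra.
move=> n; rewrite /coef -(mpow_lump HAB) /Rdiv rsum_distrl; apply: rsum_ext => h.
by case: ifP => _; lra.
Qed.

Lemma mpow_supp (T : finType) (A : T -> T -> R) (Pr : pred T) :
  (forall g w, Pr g -> A g w <> 0 -> Pr w) ->
  forall n g h, Pr g -> mpow A n g h <> 0 -> Pr h.
Proof.
move=> HA; elim=> [|n IH] g h Hg /=.
  by case: eqP => [<- //|_ []].
move=> /rsum_nonzero [w Hw].
have Hw1 : A g w <> 0 by move=> H; apply: Hw; rewrite H; ring.
have Hw2 : mpow A n w h <> 0 by move=> H; apply: Hw; rewrite H; ring.
exact: (IH w h (HA g w Hg Hw1) Hw2).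
Qed.

Lemma mexp_supp (T : finType) (A : T -> T -> R) (Pr : pred T) :
  (forall g w, Pr g -> A g w <> 0 -> Pr w) ->
  forall t g h, Pr g -> ~~ Pr h -> mexp A t g h = 0.
Proof.
move=> HA t g h Hg Hh; rewrite /mexp -(PSeries_const_0 t); apply: PSeries_ext => n.
rewrite /coef; case: (Req_dec (mpow A n g h) 0) => [->|H]; first lra.
by have := mpow_supp HA Hg H; rewrite (negbTE Hh).
Qed.

Definition comp (S : finType) (f g : {ffun S -> S}) : {ffun S -> S} := [ffun x => f (g x)].

Lemma incr_comp (S : finType) (le : rel S) f g :
  increasing_map le f -> increasing_map le g -> increasing_map le (comp f g).
Proof.
move=> /forallP Hf /forallP Hg; apply/forallP => x; apply/forallP => y; apply/implyP => H.
rewrite !ffunE; move: (Hg x) => /forallP /(_ y) /implyP /(_ H) H2.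
by move: (Hf (g x)) => /forallP /(_ (g y)) /implyP /(_ H2).
Qed.

Lemma incr_id (S : finType) (le : rel S) : increasing_map le [ffun x => x].
Proof. by apply/forallP => x; apply/forallP => y; apply/implyP; rewrite !ffunE. Qed.

Section Construction.
Variables (S : finType) (le : rel S) (Lam : {ffun S -> S} -> R).

Definition Gof (g h : {ffun S -> S}) : R :=
  rsum (fun f => if increasing_map le f && (comp f g == h) then Lam f else 0).

Definition Gmat (g h : {ffun S -> S}) : R :=
  if h == g then - rsum (fun h' => if h' == g then 0 else Gof g h') else Gof g h.

Hypothesis Lam_pos : forall f, increasing_map le f -> 0 <= Lam f.

Lemma Gmat_gen : is_generator Gmat.
Proof.
split.
  move=> x y Hxy; rewrite /Gmat; case: eqP => [H|_]; first by case: Hxy.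
  apply: rsum_ge0 => f; case: ifP => [/andP[Hf _]|_]; [exact: Lam_pos|lra].
move=> x; rewrite /Gmat eqxx; congr Ropp; apply: rsum_ext => y.
by case: ifP.
Qed.

Lemma Gmat_supp g w : increasing_map le g -> Gmat g w <> 0 -> increasing_map le w.
Proof.
move=> Hg; rewrite /Gmat; case: eqP => [-> //|_].
move=> /rsum_nonzero [f]; case: ifP => [/andP[Hf /eqP <-] _|_ []//].
exact: incr_comp.
Qed.

Variable L : S -> S -> R.
Hypothesis HL : is_generator L.
Hypothesis HLam : forall x y : S, x <> y ->
       L x y = rsum (fun f : {ffun S -> S} =>
                       if increasing_map le f && (f x == y) then Lam f else 0).

Lemma Gmat_lump_off (z : S) (g : {ffun S -> S}) x : x != g z ->
  rsum (fun w : {ffun S -> S} => if w z == x then Gmat g w else 0) = L (g z) x.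
Proof.
move=> Hx.
rewrite (rsum_ext (G := fun w : {ffun S -> S} => if w z == x then Gof g w else 0)); last first.
  move=> w; rewrite /Gmat; case: (w =P g) => [->|_] //.
  by rewrite [g z == x]eq_sym (negbTE Hx).
rewrite HLam; last by move=> H; rewrite H eqxx in Hx.
rewrite /Gof (rsum_ext (G := fun w : {ffun S -> S} => rsum (fun f =>
    if w z == x then (if increasing_map le f && (comp f g == w) then Lam f else 0) else 0)));
  last by move=> w; rewrite rsum_if.
rewrite rsum_exchange; apply: rsum_ext => f.
rewrite (@rsum_one _ _ (comp f g)); last first.
  move=> w Hw; case: ifP => // _; rewrite eq_sym (negbTE Hw) andbF //.
rewrite eqxx andbT /comp ffunE.
by case: (f (g z) == x); rewrite ?andbT ?andbF.
Qed.

Lemma Gmat_rowsum g : rsum (Gmat g) = 0.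
Proof. exact: gen_rowsum Gmat_gen g. Qed.

Lemma Gmat_lump (z : S) (g : {ffun S -> S}) x :
  rsum (fun w : {ffun S -> S} => if w z == x then Gmat g w else 0) = L (g z) x.
Proof.
case: (x =P g z) => [->|/eqP]; last exact: Gmat_lump_off.
set lump := fun x => rsum (fun w : {ffun S -> S} => if w z == x then Gmat g w else 0).
have Htot : rsum lump = 0.
  rewrite /lump rsum_exchange -[X in _ = X](Gmat_rowsum g); apply: rsum_ext => w.
  rewrite (@rsum_one _ _ (w z)) ?eqxx //.
  by move=> x' Hx'; rewrite eq_sym (negbTE Hx').
have := rsum_split lump (g z); rewrite Htot.
rewrite (rsum_ext (F := fun y => if y == g z then 0 else lump y)
                  (G := fun y => if y == g z then 0 else L (g z) y)); last first.
  by move=> y; case: ifP => // /negbT H; rewrite /lump Gmat_lump_off.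
case: HL => _ /(_ (g z)) Hd.
rewrite /lump /= => H; lra.
Qed.

End Construction.

Lemma derive_rsum (T : finType) (F : T -> R -> R) (d : T -> R) t :
  (forall i, derivable_pt_lim (F i) t (d i)) ->
  derivable_pt_lim (fun s => rsum (fun i => F i s)) t (rsum d).
Proof.
move=> H; rewrite /rsum; elim: (index_enum T) => [|a r IH].
  have -> : (fun s => \big[Rplus/0]_(i <- [::]) F i s) = fct_cte 0.
    by apply: FunctionalExtensionality.functional_extensionality => s; rewrite big_nil.
  rewrite big_nil; exact: derivable_pt_lim_const.
have -> : (fun s => \big[Rplus/0]_(i <- a :: r) F i s) =
          (F a + (fun s => \big[Rplus/0]_(i <- r) F i s))%F.
  by apply: FunctionalExtensionality.functional_extensionality => s; rewrite big_cons.
rewrite big_cons; exact: derivable_pt_lim_plus.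
Qed.

Lemma deriv_eq_right (f g : R -> R) a b :
  (forall t, 0 <= t -> f t = g t) ->
  derivable_pt_lim f 0 a -> derivable_pt_lim g 0 b -> a = b.
Proof.
move=> Hfg Hf Hg; apply: Classical_Prop.NNPP => Hab.
have He : 0 < Rabs (a - b) / 2.
  have : 0 < Rabs (a - b) by apply: Rabs_pos_lt; lra.
  lra.
case: (Hf _ He) => d1 H1; case: (Hg _ He) => d2 H2.
set h := Rmin d1 d2 / 2.
have Hd1 := cond_pos d1; have Hd2 := cond_pos d2.
have Hm := Rmin_pos _ _ Hd1 Hd2; have Hm1 := Rmin_l d1 d2; have Hm2 := Rmin_r d1 d2.
have Hh : 0 < h by rewrite /h; lra.
have Hh0 : h <> 0 by lra.
have Ha1 : Rabs h < d1 by rewrite Rabs_right /h; lra.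
have Ha2 : Rabs h < d2 by rewrite Rabs_right /h; lra.
have K1 := H1 h Hh0 Ha1; have K2 := H2 h Hh0 Ha2.
rewrite !Hfg in K1; try lra.
move: K1 K2; set q := (g (0 + h) - g 0) / h => K1 K2.
move: He; split_Rabs; lra.
Qed.

Lemma deriv_pos (f : R -> R) a :
  derivable_pt_lim f 0 a -> 0 < a -> f 0 = 0 -> exists h, 0 < h /\ 0 < f h.
Proof.
move=> Hf Ha H0.
have He : 0 < a / 2 by lra.
case: (Hf _ He) => d H1.
have Hd := cond_pos d.
set h := d / 2.
have Hh : 0 < h by rewrite /h; lra.
have Hh0 : h <> 0 by lra.
have Ha1 : Rabs h < d by rewrite Rabs_right /h; lra.
have K := H1 h Hh0 Ha1; rewrite H0 Rplus_0_l Rminus_0_r in K.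
exists h; split => //.
have Hq : 0 < f h / h by move: K; split_Rabs; lra.
have -> : f h = (f h / h) * h by field.
exact: Rmult_lt_0_compat.
Qed.

Lemma fdd_lump (S : finType) (le : rel S) (Lam : {ffun S -> S} -> R) (L : S -> S -> R) :
  (forall f, increasing_map le f -> 0 <= Lam f) ->
  is_generator L ->
  (forall x y : S, x <> y ->
       L x y = rsum (fun f : {ffun S -> S} =>
                       if increasing_map le f && (f x == y) then Lam f else 0)) ->
  forall z ds (g0 : {ffun S -> S}),
    fdd_maps (mexp (Gmat le Lam)) z g0 ds = fdd_pts (mexp L) (g0 z) ds.
Proof.
move=> Hpos HL HLam z; elim=> [|[d y] ds IH] g0 //=.
rewrite (rsum_ext (G := fun g : {ffun S -> S} =>
            (if g z == y then mexp (Gmat le Lam) d g0 g else 0) * fdd_pts (mexp L) y ds)).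
  rewrite -rsum_distrl; congr Rmult.
  exact: (mexp_lump (phi := fun h : {ffun S -> S} => h z) (Gmat_lump Hpos HL HLam z)).
move=> g; case: eqP => [<-|_]; last lra.
by rewrite IH.
Qed.

Theorem proposition2p1 (S : finType) (le : rel S)
    (le_refl : reflexive le) (le_anti : antisymmetric le)
    (le_trans : transitive le)
    (L : S -> S -> R) (HL : is_generator L) :
  realizably_monotone le L <->
  exists Lam : {ffun S -> S} -> R,
    (forall f, increasing_map le f -> (0 <= Lam f)%R) /\
    (forall x y : S, x <> y ->
       L x y = rsum (fun f : {ffun S -> S} =>
                       if increasing_map le f && (f x == y) then Lam f else 0%R)).
Proof.
split.
- case=> P [G [Q [HP [HG [HQ [Hmon Hfdd]]]]]].
  set Id := [ffun x : S => x].
  have HQd : forall g, derivable_pt_lim (fun s => Q s Id g) 0 (G Id g).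
    move=> g; have := proj2 HQ 0 Id g.
    rewrite (@rsum_one _ _ g); last by move=> w Hw; rewrite (proj1 HQ) (negbTE Hw); ring.
    by rewrite (proj1 HQ) eqxx Rmult_1_r.
  have K : forall z y, L z y = rsum (fun g : {ffun S -> S} => if g z == y then G Id g else 0).
    move=> z y; symmetry.
    apply: (deriv_eq_right (f := fun s => rsum (fun g : {ffun S -> S} =>
                                        if g z == y then Q s Id g else 0))
                           (g := fun s => P s z y)).
    + move=> t Ht.
      have HF : List.Forall (fun p : R * S => 0 <= p.1) [:: (t, y)] by constructor.
      have := Hfdd z [:: (t, y)] HF.
      rewrite /= Rmult_1_r => <-; apply: rsum_ext => g; case: ifP => _ //; rewrite /Id ?Rmult_1_r //.
    + apply: derive_rsum => g; case: ifP => _; first exact: HQd.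
      exact: derivable_pt_lim_const.
    + have := proj2 HP 0 z y.
      rewrite (@rsum_one _ _ y); last by move=> w Hw; rewrite (proj1 HP) (negbTE Hw); ring.
      by rewrite (proj1 HP) eqxx Rmult_1_r.
  exists (fun f => if f == Id then 0 else G Id f); split.
    move=> f _; case: eqP => [_|Hf]; first lra.
    by apply: (proj1 HG); move=> E; apply: Hf.
  move=> x y Hxy; rewrite K; apply: rsum_ext => f.
  case Hfx: (f x == y); last by rewrite andbF.
  have Hf : f != Id.
    apply/eqP => E; move: Hfx; rewrite E ffunE => /eqP; exact: Hxy.
  rewrite (negbTE Hf) andbT.
  case Hinc: (increasing_map le f) => //.
  have Hge : 0 <= G Id f by apply: (proj1 HG); move=> E; rewrite E eqxx in Hf.
  case: (Rle_lt_or_eq_dec _ _ Hge) => [Hlt|<-] //.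
  have Q0 : Q 0 Id f = 0 by rewrite (proj1 HQ) eq_sym (negbTE Hf).
  case: (deriv_pos (HQd f) Hlt Q0) => h [Hh Hqh].
  have := Hmon h f (Rlt_le _ _ Hh) (Rgt_not_eq _ _ Hqh).
  by rewrite Hinc.
- case=> Lam [Hpos HLam].
  exists (mexp L), (Gmat le Lam), (mexp (Gmat le Lam)).
  split; first exact: mexp_trans.
  split; first exact: Gmat_gen Hpos.
  split; first exact: mexp_trans.
  split.
    move=> t g _ Hne; case Hg: (increasing_map le g) => //; exfalso; apply: Hne.
    apply: (mexp_supp (Pr := increasing_map le)).
    + move=> g0 w; exact: Gmat_supp.
    + exact: incr_id.
    + by rewrite Hg.
  move=> z ds _; rewrite (fdd_lump Hpos HL HLam) ffunE //.
Qed.
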